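(* Let $(X,\tau)$ be a topological accessibility space. Then: (a) if $\tau$ is sequential, it is Fréchet; (b) if $\tau$ has countable $\mathrm{S}_0$-character (i.e., a weak base $(\mathcal{B}_x)_{x\in X}$ with each $\mathcal{B}_x$ countable), then $\tau$ has countable character (is first-countable); (c) if $\tau$ is symmetrizable, then it is semi-metrizable.
   Context: A topological space $(X,\tau)$ is an accessibility space if for each $x_0\in X$ and every $H\subset X$ with $x_0\in\mathrm{cl}(H\setminus\{x_0\})$, there is a closed set $F$ with $x_0\in\mathrm{cl}(F\setminus\{x_0\})$ and $x_0\notin\mathrm{cl}(F\setminus H\setminus\{x_0\})$. Sequential: every sequentially closed set (containing all limits of sequences in it) is closed. Fréchet: whenever $x\in\mathrm{cl}A$, some sequence in $A$ converges to $x$. A weak base is a family $(\mathcal{B}_x)_{x\in X}$ of filter-bases with $x\in\bigcap\mathcal{B}_x$ such that $U$ is open iff for every $x\in U$ some $V\in\mathcal{B}_x$ satisfies $V\subset U$. A semi-metric is $d:X\times X\to[0,\infty)$ symmetric with $d(x,y)=0\iff x=y$, with balls $B(x,\epsilon)=\{y:d(x,y)<\epsilon\}$. $\tau$ is symmetrizable if for some semi-metric $d$, $O$ is open iff for every $x\in O$ some $B(x,\epsilon)\subset O$; $\tau$ is semi-metrizable if for some semi-metric $d$, $x\in\mathrm{cl}A\iff\inf_{a\in A}d(x,a)=0$ for all $x,A$. *)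

(* Defs.v *)
From Stdlib Require Import Reals.
Open Scope R_scope.

Definition set (X : Type) := X -> Prop.

Record topology (X : Type) := Topology {
  open : set X -> Prop;
  open_full : open (fun _ => True);
  open_inter : forall U V, open U -> open V -> open (fun x => U x /\ V x);
  open_union : forall F : set (set X),
      (forall U, F U -> open U) -> open (fun x => exists U, F U /\ U x)
}.
Arguments open {X} t U.

Section Topo.
Context {X : Type} (T : topology X).

Definition closed (F : set X) : Prop := open T (fun x => ~ F x).

Definition cl (A : set X) (x : X) : Prop :=
  forall U, open T U -> U x -> exists y, U y /\ A y.

Definition minus (A B : set X) : set X := fun y => A y /\ ~ B y.
Definition minus_pt (A : set X) (x0 : X) : set X := fun y => A y /\ y <> x0.

Definition accessibility_space : Prop :=
  forall (x0 : X) (H : set X),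
    cl (minus_pt H x0) x0 ->
    exists F : set X, closed F /\ cl (minus_pt F x0) x0 /\
                      ~ cl (minus_pt (minus F H) x0) x0.

Definition converges (s : nat -> X) (x : X) : Prop :=
  forall U, open T U -> U x -> exists N : nat, forall n, (N <= n)%nat -> U (s n).

Definition seq_closed (A : set X) : Prop :=
  forall (s : nat -> X) (x : X), (forall n, A (s n)) -> converges s x -> A x.

Definition sequential : Prop := forall A, seq_closed A -> closed A.

Definition frechet : Prop :=
  forall (A : set X) (x : X), cl A x ->
    exists s : nat -> X, (forall n, A (s n)) /\ converges s x.

Definition included (A B : set X) : Prop := forall y, A y -> B y.

Definition filter_base (B : set (set X)) : Prop :=
  (exists V, B V) /\
  (forall V1 V2, B V1 -> B V2 ->
     exists V3, B V3 /\ included V3 (fun y => V1 y /\ V2 y)).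

Definition weak_base (B : X -> set (set X)) : Prop :=
  (forall x, filter_base (B x)) /\
  (forall x V, B x V -> V x) /\
  (forall U : set X, open T U <->
     (forall x, U x -> exists V, B x V /\ included V U)).

(* a family of sets is countable: it admits a surjection from nat
   (our families are nonempty filter bases, so this covers finite ones) *)
Definition countable_family (F : set (set X)) : Prop :=
  exists e : nat -> set X, forall V, F V -> exists n, e n = V.

Definition countable_S0_character : Prop :=
  exists B : X -> set (set X), weak_base B /\ forall x, countable_family (B x).

Definition first_countable : Prop :=
  forall x : X, exists e : nat -> set X,
    (forall n, open T (e n) /\ e n x) /\
    (forall U, open T U -> U x -> exists n, included (e n) U).

Definition semi_metric (d : X -> X -> R) : Prop :=
  (forall x y, 0 <= d x y) /\
  (forall x y, d x y = d y x) /\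
  (forall x y, d x y = 0 <-> x = y).

Definition ball (d : X -> X -> R) (x : X) (eps : R) : set X :=
  fun y => d x y < eps.

Definition symmetrizable : Prop :=
  exists d, semi_metric d /\
    forall O : set X, open T O <->
      (forall x, O x -> exists eps, 0 < eps /\ included (ball d x eps) O).

(* inf_{a in A} d(x,a) = 0 (with inf of the empty set = +infinity), unfolded:
   for every eps > 0 there is a in A with d x a < eps *)
Definition inf_dist_zero (d : X -> X -> R) (x : X) (A : set X) : Prop :=
  forall eps, 0 < eps -> exists a, A a /\ d x a < eps.

Definition semi_metrizable : Prop :=
  exists d, semi_metric d /\
    forall (x : X) (A : set X), cl A x <-> inf_dist_zero d x A.

End Topo.

(* Main.v *)
Require Import Defs.
From Stdlib Require Import Reals.
From Stdlib Require Import Classical Lia Lra.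

Section H.
Context {X : Type} (T : topology X).

Lemma closed_cl (F : set X) y : closed T F -> cl T F y -> F y.
Proof.
  intros HF Hc. apply NNPP; intro Hn.
  destruct (Hc _ HF Hn) as [z [Hz1 Hz2]]. contradiction.
Qed.

Lemma not_cl (B : set X) x : ~ cl T B x ->
  exists U, open T U /\ U x /\ forall y, U y -> ~ B y.
Proof.
  intro H. apply NNPP; intro Hn; apply H; intros U HU Ux.
  apply NNPP; intro Hne; apply Hn; exists U; repeat split; auto.
  intros y Uy By; apply Hne; exists y; auto.
Qed.

Lemma cl_minus (A : set X) x : cl T A x -> ~ A x -> cl T (minus_pt A x) x.
Proof.
  intros Hcl nA U HU Ux; destruct (Hcl U HU Ux) as [y [Uy Ay]].
  exists y; split; [|split]; auto; intro; subst; contradiction.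
Qed.
End H.

Theorem corollary4p3 (X : Type) (T : topology X) :
  accessibility_space T ->
  (sequential T -> frechet T) /\
  (countable_S0_character T -> first_countable T) /\
  (symmetrizable T -> semi_metrizable T).
Proof.
  intro Hacc. split; [|split].
  - intros Hseq A x Hcl.
    destruct (classic (A x)) as [Ax|nAx].
    + exists (fun _ => x). split; auto. intros U _ HU; exists 0%nat; auto.
    + destruct (Hacc x A (cl_minus T A x Hcl nAx)) as [F [HF [HF1 HF2]]].
      assert (Hns : ~ seq_closed T (minus_pt F x)).
      { intro Hsc. apply Hseq in Hsc.
        destruct (closed_cl T _ x Hsc HF1) as [_ h]. apply h; reflexivity. }
      unfold seq_closed in Hns.
      apply not_all_ex_not in Hns as [s Hs].
      apply not_all_ex_not in Hs as [y Hs].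
      apply imply_to_and in Hs as [Hs1 Hs].
      apply imply_to_and in Hs as [Hconv HnG].
      assert (Fy : F y).
      { apply (closed_cl T); auto. intros U HU Uy.
        destruct (Hconv U HU Uy) as [N HN]. exists (s N).
        split; [apply HN; lia | apply Hs1]. }
      assert (y = x) by (apply NNPP; intro; apply HnG; split; auto). subst y.
      destruct (not_cl T _ _ HF2) as [U [HU [Ux HUn]]].
      destruct (Hconv U HU Ux) as [N HN].
      exists (fun n => s (N + n)%nat). split.
      * intro n. apply NNPP; intro nA. apply (HUn (s (N+n)%nat)).
        apply HN; lia. destruct (Hs1 (N+n)%nat). split; auto. split; auto.
      * intros V HV Vx. destruct (Hconv V HV Vx) as [M HM].
        exists M. intros n Hn. apply HM; lia.
  - intros [B [[Hfb [Hmem Hopen]] Hcnt]] x.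
    assert (nbhd : forall V, B x V -> exists O, open T O /\ O x /\ Defs.included O V).
    { intros V HV. apply NNPP; intro Hn.
      assert (Hc : cl T (minus_pt (fun y => ~ V y) x) x).
      { intros U HU Ux; apply NNPP; intro Hne; apply Hn; exists U; split; auto;
          split; auto; intros y Uy; apply NNPP; intro nVy; apply Hne; exists y;
          split; auto; split; auto; intro; subst; apply nVy; apply Hmem; auto. }
      destruct (Hacc x _ Hc) as [F [HF [HF1 HF2]]].
      destruct (not_cl T _ _ HF2) as [W [HW [Wx HWn]]].
      set (U := fun y => ~ (F y /\ y <> x)).
      assert (HUo : open T U).
      { apply (proj2 (Hopen U)). intros y Uy. destruct (classic (y = x)).
        - subst y. destruct (proj1 (Hopen W) HW x Wx) as [V1 [HV1 V1W]].
          destruct (proj2 (Hfb x) V1 V HV1 HV) as [V3 [HV3 V3i]].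
          exists V3; split; auto. intros z Hz [Fz nz].
          destruct (V3i z Hz) as [z1 z2]. apply (HWn z (V1W z z1)).
          split; auto. split; auto.
        - assert (nF : ~ F y) by (intro; apply Uy; split; auto).
          destruct (proj1 (Hopen _) HF y nF) as [V' [HV' V'i]].
          exists V'; split; auto. intros z Hz [Fz _]. apply (V'i z Hz Fz). }
      destruct (HF1 U HUo) as [y [Uy Gy]].
      { intros [_ h]; apply h; reflexivity. }
      apply Uy; exact Gy. }
    destruct (Hcnt x) as [E HE].
    exists (fun n y => exists O, (open T O /\ O x /\ (B x (E n) -> Defs.included O (E n))) /\ O y).
    split.
    + intro n; split.
      * exact (open_union _ T (fun O => open T O /\ O x /\ (B x (E n) -> Defs.included O (E n)))
                 (fun U HU => proj1 HU)).
      * destruct (classic (B x (E n))) as [HB|HB].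
        -- destruct (nbhd _ HB) as [O [HO [Ox Oi]]]. exists O; auto.
        -- exists (fun _ => True). split; auto. split; [apply open_full|].
           split; auto. intro; contradiction.
    + intros U HU Ux. destruct (proj1 (Hopen U) HU x Ux) as [V [HV Vi]].
      destruct (HE V HV) as [n En]. exists n.
      intros y [O [[_ [_ HO]] Oy]]. apply Vi. rewrite <- En.
      apply HO; [rewrite En; auto | auto].
  - intros [d [Hsm Hop]]. exists d; split; auto. intros x A; split.
    + intros Hcl eps Heps. apply NNPP; intro Hn.
      assert (nAx : ~ A x).
      { intro Ax; apply Hn; exists x; split; auto.
        destruct Hsm as [_ [_ h]]. rewrite (proj2 (h x x) eq_refl). auto. }
      destruct (Hacc x A (cl_minus T A x Hcl nAx)) as [F [HF [HF1 HF2]]].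
      destruct (not_cl T _ _ HF2) as [W [HW [Wx HWn]]].
      destruct (proj1 (Hop W) HW x Wx) as [dl [Hdl dli]].
      set (U := fun y => ~ (F y /\ y <> x)).
      assert (HUo : open T U).
      { apply (proj2 (Hop U)). intros y Uy. destruct (classic (y = x)).
        - subst y. exists (Rmin dl eps). split; [apply Rmin_pos; auto|].
          intros z Hz [Fz nz]. unfold ball in Hz.
          assert (h1 : d x z < dl) by (eapply Rlt_le_trans; [exact Hz| apply Rmin_l]).
          assert (h2 : d x z < eps) by (eapply Rlt_le_trans; [exact Hz| apply Rmin_r]).
          assert (Az : A z).
          { apply NNPP; intro nA. apply (HWn z (dli z h1)). split; auto. split; auto. }
          apply Hn; exists z; auto.
        - assert (nF : ~ F y) by (intro; apply Uy; split; auto).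
          destruct (proj1 (Hop _) HF y nF) as [e' [He' e'i]].
          exists e'; split; auto. intros z Hz [Fz _]. apply (e'i z Hz Fz). }
      destruct (HF1 U HUo) as [y [Uy Gy]].
      { intros [_ h]; apply h; reflexivity. }
      apply Uy; exact Gy.
    + intros Hinf U HU Ux. destruct (proj1 (Hop U) HU x Ux) as [eps [He Hb]].
      destruct (Hinf eps He) as [a [Aa Ha]]. exists a; split; auto.
Qed.
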